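(* Let $R$ be a commutative unital ring, $G$ a group and $(\mathcal B_1,\Phi_1)\subseteq(\mathcal B_2,\Phi_2)$ a partial subaction of $G$ on generalized Boolean algebras; let $A_k=\mathrm{Lc}(R,\mathcal B_k)\rtimes_{\Phi_k}G$ with $A_1\subseteq A_2$. Suppose $\mathcal B_1$ is an ideal of $\mathcal B_2$ and $A_1$ is contained in no proper two-sided ideal of $A_2$. Then for every $U\in\mathcal B_2$ there exist an index set $I$, elements $U_i\in\mathcal B_1$ ($i\in I$) and a surjective left $A_2$-module homomorphism $\bigoplus_{i\in I}A_2(U_i\delta_e)\to A_2(U\delta_e)$.
   Context: A generalized Boolean algebra is a distributive relatively complemented lattice with least element $0$; an ideal is a subset closed under finite joins and under meets with arbitrary elements. A partial action $\Phi$ of $G$ on $\mathcal B$: ideals $\mathcal I_t$ and isomorphisms $\phi_t:\mathcal I_{t^{-1}}\to\mathcal I_t$ with $\mathcal I_e=\mathcal B$, $\phi_e=\mathrm{id}$, $\phi_s(\mathcal I_{s^{-1}}\cap\mathcal I_t)=\mathcal I_s\cap\mathcal I_{st}$, $\phi_s\phi_t=\phi_{st}$ where defined. A partial subaction: $\mathcal B_1\subseteq\mathcal B_2$ sub generalized Boolean algebra, $\mathcal I_{1,t}\subseteq\mathcal I_{2,t}$, $\phi_{2,t}$ restricting to $\phi_{1,t}$. $\mathrm{Lc}(R,\mathcal B)$ is the algebra of locally constant compactly supported $R$-valued functions on the Stone space of $\mathcal B$, spanned by idempotents $1_U$; $\mathrm{Lc}(R,\mathcal B)\rtimes_\Phi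 G=\bigoplus_g\mathrm{Lc}(R,\mathcal I_g)\delta_g$ with $U\delta_g:=1_U\delta_g$ and $(U\delta_g)(V\delta_h)=\phi_g(\phi_{g^{-1}}(U)\cap V)\delta_{gh}$. $A_1$ is identified with the $R$-span of $\{U\delta_g:U\in\mathcal I_{1,g}\}$ in $A_2$. *)

(* Defs.v *)
From HB Require Import structures.
From mathcomp Require Import all_boot all_order all_algebra.
From mathcomp Require Import boolp.
From Stdlib Require List.

Set Implicit Arguments.
Unset Strict Implicit.
Unset Printing Implicit Defensive.

Import Order.TTheory GRing.Theory.
Local Open Scope ring_scope.

(* Generalized Boolean algebras are MathComp's [cbDistrLatticeType]s
   (distributive lattices with bottom and relative complement [Order.diff]). *)

Section GBA.
Variables (d : Order.disp_t) (B : cbDistrLatticeType d).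

Definition is_sub_gba (C : B -> Prop) : Prop :=
  [/\ C Order.bottom,
      forall U V, C U -> C V -> C (Order.meet U V),
      forall U V, C U -> C V -> C (Order.join U V) &
      forall U V, C U -> C V -> C (Order.diff U V)].

Definition is_gba_ideal (C J : B -> Prop) : Prop :=
  [/\ forall U, J U -> C U,
      J Order.bottom,
      forall U V, J U -> J V -> J (Order.join U V) &
      forall U V, J U -> C V -> J (Order.meet U V)].

Definition is_gba_iso (Dom Cod : B -> Prop) (f : B -> B) : Prop :=
  [/\ forall U, Dom U -> Cod (f U),
      forall V, Cod V -> exists2 U, Dom U & f U = V,
      forall U V, Dom U -> Dom V -> f U = f V -> U = V,
      forall U V, Dom U -> Dom V -> f (Order.meet U V) = Order.meet (f U) (f V) &
      forall U V, Dom U -> Dom V -> f (Order.join U V) = Order.join (f U) (f V)].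

Variables (G : Type) (mul : G -> G -> G) (inv : G -> G) (e : G).

Definition is_group : Prop :=
  [/\ forall x y z, mul x (mul y z) = mul (mul x y) z,
      forall x, mul e x = x,
      forall x, mul x e = x,
      forall x, mul (inv x) x = e &
      forall x, mul x (inv x) = e].

Definition is_partial_action (C : B -> Prop) (I : G -> B -> Prop)
    (phi : G -> B -> B) : Prop :=
  [/\ forall t, is_gba_ideal C (I t),
      (forall U, I e U <-> C U) /\ (forall U, C U -> phi e U = U),
      forall t, is_gba_iso (I (inv t)) (I t) (phi t),
      (* phi_s (I_{s^-1} cap I_t) = I_s cap I_{st} *)
      forall s t V, (I s V /\ I (mul s t) V) <->
                    (exists U, [/\ I (inv s) U, I t U & phi s U = V]) &
      forall s t U, I (inv t) U -> I (inv s) (phi t U) ->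
                    phi s (phi t U) = phi (mul s t) U].

Definition is_partial_subaction (C1 : B -> Prop) (I1 : G -> B -> Prop)
    (phi1 : G -> B -> B) (C2 : B -> Prop) (I2 : G -> B -> Prop)
    (phi2 : G -> B -> B) : Prop :=
  [/\ (forall U, C1 U -> C2 U) /\ is_sub_gba C1,
      is_partial_action C1 I1 phi1,
      is_partial_action C2 I2 phi2,
      forall t U, I1 t U -> I2 t U &
      forall t U, I1 (inv t) U -> phi1 t U = phi2 t U].

(* Points of the Stone space of B: nonzero lattice homomorphisms B -> bool
   (equivalently, ultrafilters of B); 1_U is evaluated at xi as xi U. *)
Definition stone_point (xi : B -> bool) : Prop :=
  [/\ forall U V, xi (Order.meet U V) = xi U && xi V,
      forall U V, xi (Order.join U V) = xi U || xi V,
      xi Order.bottom = false &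
      exists U, xi U].

(* The crossed product Lc(R,B) x_Phi G of the partial action (I, phi).
   An element is presented as a finite formal R-combination
   sum_k r_k U_k delta_{g_k} with U_k in I_{g_k}; it denotes the finitely
   supported function g |-> sum_{g_k = g} r_k 1_{U_k} in
   (+)_g Lc(R, I_g) delta_g, functions being on the Stone space of B.
   Two presentations are equal in the algebra iff their denotations agree
   ([cp_eq]).  Multiplication is the bilinear extension of
   (U delta_g)(V delta_h) = phi_g(phi_{g^-1}(U) cap V) delta_{gh}. *)
Variables (R : comPzRingType) (I : G -> B -> Prop) (phi : G -> B -> B).

Definition cterm := (R * B * G)%type.
Definition cpelt := seq cterm.

Definition cp_wf (x : cpelt) : Prop := forall t, List.In t x -> I t.2 t.1.2.

Definition cp_eval (x : cpelt) (h : G) (xi : B -> bool) : R :=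
  \sum_(t <- x) (if `[< t.2 = h >] then t.1.1 * (xi t.1.2)%:R else 0).

Definition cp_eq (x y : cpelt) : Prop :=
  forall h xi, stone_point xi -> cp_eval x h xi = cp_eval y h xi.

Definition cp_add (x y : cpelt) : cpelt := x ++ y.
Definition cp_zero : cpelt := [::].
Definition cp_scale (r : R) (x : cpelt) : cpelt :=
  [seq (r * t.1.1, t.1.2, t.2) | t <- x].

Definition cp_mul_term (t u : cterm) : cterm :=
  (t.1.1 * u.1.1, phi t.2 (Order.meet (phi (inv t.2) t.1.2) u.1.2), mul t.2 u.2).

Definition cp_mul (x y : cpelt) : cpelt := [seq cp_mul_term t u | t <- x, u <- y].

Definition delta (U : B) (g : G) : cpelt := [:: (1, U, g)].

Definition cp_two_sided_ideal (J : cpelt -> Prop) : Prop :=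
  [/\ (forall x, J x -> cp_wf x) /\
        (forall x y, J x -> cp_wf y -> cp_eq x y -> J y),
      J cp_zero,
      forall x y, J x -> J y -> J (cp_add x y),
      forall r x, J x -> J (cp_scale r x) &
      forall a x, cp_wf a -> J x -> J (cp_mul a x) /\ J (cp_mul x a)].

Definition cp_in_left_ideal (U : B) (x : cpelt) : Prop :=
  cp_wf x /\ exists2 a, cp_wf a & cp_eq x (cp_mul a (delta U e)).

Definition cp_dsum (J : Type) (Ui : J -> B) (y : J -> cpelt) : Prop :=
  (forall i, cp_in_left_ideal (Ui i) (y i)) /\
  exists s : seq J, forall i, ~ List.In i s -> cp_eq (y i) cp_zero.

Definition cp_surj_module_hom (J : Type) (Ui : J -> B) (U : B)
    (F : (J -> cpelt) -> cpelt) : Prop :=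
  [/\ forall y, cp_dsum Ui y -> cp_in_left_ideal U (F y),
      forall y y', cp_dsum Ui y -> cp_dsum Ui y' ->
        (forall i, cp_eq (y i) (y' i)) -> cp_eq (F y) (F y'),
      forall y y', cp_dsum Ui y -> cp_dsum Ui y' ->
        cp_eq (F (fun i => cp_add (y i) (y' i))) (cp_add (F y) (F y')),
      forall a y, cp_wf a -> cp_dsum Ui y ->
        cp_eq (F (fun i => cp_mul a (y i))) (cp_mul a (F y)) &
      forall x, cp_in_left_ideal U x -> exists2 y, cp_dsum Ui y & cp_eq (F y) x].

End GBA.

(* Main.v *)
Require Import Defs.
From HB Require Import structures.
From mathcomp Require Import all_boot all_order all_algebra.
From mathcomp Require Import boolp.
From Stdlib Require List.

Set Implicit Arguments.
Unset Strict Implicit.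
Unset Printing Implicit Defensive.
Import Order.TTheory GRing.Theory.

Section Grp.
Variables (G : Type) (mul : G -> G -> G) (inv : G -> G) (e : G).
Hypothesis Hg : is_group mul inv e.

Lemma g_assoc x y z : mul x (mul y z) = mul (mul x y) z.
Proof. by case: Hg. Qed.
Lemma g_mul1 x : mul e x = x. Proof. by case: Hg. Qed.
Lemma g_mulr1 x : mul x e = x. Proof. by case: Hg. Qed.
Lemma g_mulV x : mul (inv x) x = e. Proof. by case: Hg. Qed.
Lemma g_mulrV x : mul x (inv x) = e. Proof. by case: Hg. Qed.
Lemma g_inv_uniq a b : mul a b = e -> a = inv b.
Proof. move=> H; by rewrite -[a]g_mulr1 -(g_mulrV b) g_assoc H g_mul1. Qed.
Lemma g_invK x : inv (inv x) = x.
Proof. by symmetry; apply: g_inv_uniq; rewrite g_mulrV. Qed.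
Lemma g_inv1 : inv e = e.
Proof. by rewrite -[inv e]g_mulr1 g_mulV. Qed.
Lemma g_invM g h : inv (mul g h) = mul (inv h) (inv g).
Proof. symmetry; apply: g_inv_uniq.
by rewrite -g_assoc (g_assoc (inv g)) g_mulV g_mul1 g_mulV. Qed.
Lemma g_solve_l g k h : (mul g k = h) <-> (k = mul (inv g) h).
Proof. split=> [<-|->]; first by rewrite g_assoc g_mulV g_mul1.
by rewrite g_assoc g_mulrV g_mul1. Qed.
Lemma g_solve_r t k h : (mul t k = h) <-> (t = mul h (inv k)).
Proof. split=> [<-|->]; first by rewrite -g_assoc g_mulrV g_mulr1.
by rewrite -g_assoc g_mulV g_mulr1. Qed.
End Grp.

Section PA.
Variables (d : Order.disp_t) (B : cbDistrLatticeType d).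
Variables (G : Type) (mul : G -> G -> G) (inv : G -> G) (e : G).
Hypothesis Hg : is_group mul inv e.
Variables (I : G -> B -> Prop) (phi : G -> B -> B).
Hypothesis HP : is_partial_action mul inv e (fun _ => True) I phi.

Local Open Scope order_scope.

Lemma I0 g : I g \bot. Proof. by case: HP => /(_ g) []. Qed.
Lemma IIl g U V : I g U -> I g (U `&` V). Proof. move=> h; case: HP => /(_ g) [] _ _ _ H _ _ _ _; exact: H. Qed.
Lemma IIr g U V : I g V -> I g (U `&` V). Proof. by rewrite meetC; apply: IIl. Qed.
Lemma IU g U V : I g U -> I g V -> I g (U `|` V). Proof. move=> h1 h2; case: HP => /(_ g) [] _ _ H _ _ _ _ _; exact: H. Qed.
Lemma Ile g U V : U <= V -> I g V -> I g U.
Proof. by move/meet_idPl => <- /IIr; apply. Qed.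
Lemma Ie U : I e U. Proof. by case: HP => _ [H _] _ _ _; apply: (proj2 (H U)). Qed.
Lemma phie U : phi e U = U. Proof. by case: HP => _ [_ H] _ _ _; apply: H. Qed.
Lemma phiI t U : I (inv t) U -> I t (phi t U). Proof. case: HP => _ _ /(_ t) [] H1 _ _ H2 H3 _ _; auto. Qed.
Lemma phiM t U V : I (inv t) U -> I (inv t) V -> phi t (U `&` V) = phi t U `&` phi t V.
Proof. case: HP => _ _ /(_ t) [] H1 _ _ H2 H3 _ _; auto. Qed.
Lemma phiU t U V : I (inv t) U -> I (inv t) V -> phi t (U `|` V) = phi t U `|` phi t V.
Proof. case: HP => _ _ /(_ t) [] H1 _ _ H2 H3 _ _; auto. Qed.
Lemma phi_comp s t U : I (inv t) U -> I (inv s) (phi t U) -> phi s (phi t U) = phi (mul s t) U.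
Proof. by case: HP => _ _ _ _; apply. Qed.
Lemma phi_dom s t U : I (inv s) U -> I t U -> I s (phi s U) /\ I (mul s t) (phi s U).
Proof. case: HP => _ _ _ H _ h1 h2; apply/H; by exists U. Qed.
Lemma phiVI g U : I g U -> I (inv g) (phi (inv g) U).
Proof. move=> h; apply: phiI; by rewrite (g_invK Hg). Qed.
Lemma phiKV g U : I g U -> phi g (phi (inv g) U) = U.
Proof. move=> h; rewrite phi_comp ?(g_mulrV Hg) ?phie //; first by rewrite (g_invK Hg).
exact: phiVI. Qed.
Lemma phiK g U : I (inv g) U -> phi (inv g) (phi g U) = U.
Proof. move=> h; rewrite phi_comp ?(g_mulV Hg) ?phie //; rewrite (g_invK Hg); exact: phiI. Qed.
Lemma phiVM g U V : I g U -> I g V -> phi (inv g) (U `&` V) = phi (inv g) U `&` phi (inv g) V.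
Proof. move=> h1 h2; apply: phiM; by rewrite (g_invK Hg). Qed.
Lemma phi_le t U V : I (inv t) V -> U <= V -> phi t U <= phi t V.
Proof. move=> hV /meet_idPl hUV; apply/meet_idPl.
have hU : I (inv t) U by rewrite -hUV; apply: IIr.
by rewrite -phiM // hUV. Qed.
Lemma phi0 t : phi t \bot = \bot.
Proof. case: HP => _ _ /(_ t) [_ Hs _ Hm _].
have [U hU hU0] := Hs _ (I0 t).
have h0 : I (inv t) \bot by exact: I0.
rewrite -{1}(meet0x U) (Hm _ _ h0 hU) hU0 => _ _; exact: meetx0. Qed.

Lemma multerm_I g h P Q : I g P -> I h Q -> I (mul g h) (phi g (phi (inv g) P `&` Q)).
Proof.
move=> hP hQ; have [] := @phi_dom g h (phi (inv g) P `&` Q) _ _ => //.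
  exact/IIl/phiVI.
exact: IIr.
Qed.

Lemma elem_assoc g h P Q S : I g P -> I h Q ->
  phi (mul g h) (phi (inv (mul g h)) (phi g (phi (inv g) P `&` Q)) `&` S)
  = phi g (phi (inv g) P `&` phi h (phi (inv h) Q `&` S)).
Proof.
move=> hP hQ.
set P1 := phi (inv g) P.
have hP1 : I (inv g) P1 by exact: phiVI.
set Y := P1 `&` Q.
have hY1 : I (inv g) Y by exact: IIl.
have hY2 : I h Y by exact: IIr.
have s1 : phi (inv (mul g h)) (phi g Y) = phi (inv h) Y.
  rewrite (g_invM Hg) -(@phi_comp (inv h) (inv g)); first by rewrite phiK.
    by rewrite (g_invK Hg); apply: phiI.
  by rewrite phiK // (g_invK Hg).
rewrite s1.
set Z := phi (inv h) Y `&` S.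
have hZ : I (inv h) Z by apply/IIl/phiVI.
have hZY : phi h Z <= Y.
  rewrite -{1}(phiKV hY2); apply: phi_le; [exact: phiVI | exact: leIl].
have hZg : I (inv g) (phi h Z) by exact: Ile hZY hY1.
rewrite -(@phi_comp g h) //; congr (phi g _).
have hQ' : I (inv h) (phi (inv h) Q) by exact: phiVI.
have le1 : phi (inv h) Y <= phi (inv h) Q.
  apply: phi_le; [by rewrite (g_invK Hg) | exact: leIr].
have -> : Z = phi (inv h) Y `&` (phi (inv h) Q `&` S) by rewrite /Z meetA (meet_idPl le1).
rewrite phiM; [|exact: phiVI|exact: IIl].
rewrite phiKV //.
have le2 : phi h (phi (inv h) Q `&` S) <= Q.
  rewrite -{2}(phiKV hQ); apply: phi_le => //; exact: leIl.
by rewrite /Y -meetA (meet_idPr le2).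
Qed.

End PA.

Section CP.
Variables (d : Order.disp_t) (B : cbDistrLatticeType d).
Variables (G : Type) (mul : G -> G -> G) (inv : G -> G) (e : G).
Hypothesis Hg : is_group mul inv e.
Variables (R : comPzRingType) (I : G -> B -> Prop) (phi : G -> B -> B).
Hypothesis HP : is_partial_action mul inv e (fun _ => True) I phi.

Local Notation cpelt := (cpelt B G R).
Local Notation cterm := (cterm B G R).
Local Notation cmul := (cp_mul mul inv phi).
Local Notation term := (cp_mul_term mul inv phi).
Local Notation wf := (cp_wf I).
Local Open Scope ring_scope.

Lemma sum_In (T : Type) (x : seq T) (F1 F2 : T -> R) :
  (forall t, List.In t x -> F1 t = F2 t) -> \sum_(t <- x) F1 t = \sum_(t <- x) F2 t.
Proof.
elim: x => [|a x IH] H; first by rewrite !big_nil.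
rewrite !big_cons H /=; last by left.
by rewrite IH // => t ht; apply: H; right.
Qed.

Lemma eval_cat (x y : cpelt) h xi : cp_eval (x ++ y) h xi = cp_eval x h xi + cp_eval y h xi.
Proof. by rewrite /cp_eval big_cat. Qed.

Lemma eval_nil h xi : cp_eval ([::] : cpelt) h xi = 0.
Proof. by rewrite /cp_eval big_nil. Qed.

Lemma eval_flatten (T : Type) (L : seq T) (f : T -> cpelt) h xi :
  cp_eval (flatten (map f L)) h xi = \sum_(l <- L) cp_eval (f l) h xi.
Proof.
elim: L => [|a L IH]; first by rewrite big_nil eval_nil.
by rewrite /= eval_cat IH big_cons.
Qed.

Lemma eval_mul (x y : cpelt) h xi :
  cp_eval (cmul x y) h xi = \sum_(t <- x) \sum_(u <- y) cp_eval [:: term t u] h xi.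
Proof.
rewrite /cp_eval /cp_mul big_allpairs_dep; apply: eq_bigr => t _.
by apply: eq_bigr => u _; rewrite big_seq1.
Qed.

Lemma sum_mul (x y : cpelt) (F : cterm -> R) :
  \sum_(w <- cmul x y) F w = \sum_(t <- x) \sum_(u <- y) F (term t u).
Proof. by rewrite /cp_mul big_allpairs_dep. Qed.

Lemma eval_scale r (x : cpelt) h xi : cp_eval (cp_scale r x) h xi = r * cp_eval x h xi.
Proof.
rewrite /cp_eval /cp_scale big_map mulr_sumr; apply: eq_bigr => t _ /=.
by case: asboolP => _; rewrite ?mulr0 // mulrA.
Qed.

Lemma scale_mul r (x y : cpelt) : cp_scale r (cmul x y) = cmul (cp_scale r x) y.
Proof.
elim: x => [|a x IH] //.
have -> : cp_scale r (a :: x) = (r * a.1.1, a.1.2, a.2) :: cp_scale r x by [].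
rewrite /cp_mul !allpairs_cons {1}/cp_scale map_cat; congr (_ ++ _); last exact: IH.
by rewrite -map_comp; apply: eq_map => u /=; rewrite /cp_mul_term /= mulrA.
Qed.

Lemma eval_mul_catl (x x' z : cpelt) h xi :
  cp_eval (cmul (x ++ x') z) h xi = cp_eval (cmul x z) h xi + cp_eval (cmul x' z) h xi.
Proof. by rewrite !eval_mul big_cat. Qed.

Lemma eval_mul_catr (z x x' : cpelt) h xi :
  cp_eval (cmul z (x ++ x')) h xi = cp_eval (cmul z x) h xi + cp_eval (cmul z x') h xi.
Proof. by rewrite !eval_mul -big_split; apply: eq_bigr => t _; rewrite big_cat. Qed.

Lemma eval_mul_flattenr (T : Type) (z : cpelt) (L : seq T) (f : T -> cpelt) h xi :
  cp_eval (cmul z (flatten (map f L))) h xi = \sum_(l <- L) cp_eval (cmul z (f l)) h xi.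
Proof.
elim: L => [|a L IH].
  by rewrite big_nil eval_mul big1 // => t _; rewrite big_nil.
by rewrite /= eval_mul_catr IH big_cons.
Qed.

Lemma eval_mul_flattenl (T : Type) (z : cpelt) (L : seq T) (f : T -> cpelt) h xi :
  cp_eval (cmul (flatten (map f L)) z) h xi = \sum_(l <- L) cp_eval (cmul (f l) z) h xi.
Proof.
elim: L => [|a L IH]; first by rewrite big_nil eval_mul big_nil.
by rewrite /= eval_mul_catl IH big_cons.
Qed.

Lemma wf_nil : wf ([::] : cpelt). Proof. by []. Qed.
Lemma wf_cat (x y : cpelt) : wf x -> wf y -> wf (x ++ y).
Proof. by move=> hx hy t ht; case: (List.in_app_or _ _ _ ht) => [/hx|/hy]. Qed.
Lemma wf_flatten (T : Type) (L : seq T) (f : T -> cpelt) :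
  (forall l, List.In l L -> wf (f l)) -> wf (flatten (map f L)).
Proof.
elim: L => [|a L IH] H //=; apply: wf_cat; first by apply: H; left.
by apply: IH => l hl; apply: H; right.
Qed.
Lemma wf_delta U g : I g U -> wf (delta R U g).
Proof. by move=> hU t [<-|[]]. Qed.
Lemma wf_scale r (x : cpelt) : wf x -> wf (cp_scale r x).
Proof. by move=> hx t ht; case: (proj1 (List.in_map_iff _ _ _) ht) => u [<- hu]; exact: (hx u hu). Qed.
Lemma wf_mul (x y : cpelt) : wf x -> wf y -> wf (cmul x y).
Proof.
elim: x => [|a x IH] hx hy //=.
rewrite /cp_mul allpairs_cons; apply: wf_cat; last first.
  by apply: IH => // t ht; apply: hx; right.
move=> t ht; case: (proj1 (List.in_map_iff _ _ _) ht) => u [<- hu] /=.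
apply: (multerm_I Hg HP); first by apply: hx; left.
exact: hy.
Qed.

Lemma term_assoc (t u v : cterm) : I t.2 t.1.2 -> I u.2 u.1.2 ->
  term (term t u) v = term t (term u v).
Proof.
case: t => [[r1 P] g]; case: u => [[r2 Q] h]; case: v => [[r3 S] k] /= hP hQ.
rewrite /cp_mul_term /= mulrA (g_assoc Hg) (elem_assoc Hg HP) //.
Qed.

Lemma eval_assoc (x y z : cpelt) h xi : wf x -> wf y ->
  cp_eval (cmul (cmul x y) z) h xi = cp_eval (cmul x (cmul y z)) h xi.
Proof.
move=> hx hy; rewrite eval_mul sum_mul eval_mul.
apply: sum_In => t ht; rewrite sum_mul; apply: sum_In => u hu.
by apply: eq_bigr => v _; rewrite term_assoc //; [apply: hx | apply: hy].
Qed.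

End CP.

Section CP2.
Variables (d : Order.disp_t) (B : cbDistrLatticeType d).
Variables (G : Type) (mul : G -> G -> G) (inv : G -> G) (e : G).
Hypothesis Hg : is_group mul inv e.
Variables (R : comPzRingType) (I : G -> B -> Prop) (phi : G -> B -> B).
Hypothesis HP : is_partial_action mul inv e (fun _ => True) I phi.

Local Notation cpelt := (cpelt B G R).
Local Notation cterm := (cterm B G R).
Local Notation cmul := (cp_mul mul inv phi).
Local Notation term := (cp_mul_term mul inv phi).
Local Notation wf := (cp_wf I).
Local Open Scope order_scope.
Local Open Scope ring_scope.

Lemma stone_le_false (xi : B -> bool) (U V : B) : stone_point xi -> (U <= V)%O -> xi V = false -> xi U = false.
Proof.
case=> hm _ _ _ /meet_idPl hUV hV.
by rewrite -hUV hm hV andbF.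
Qed.

Lemma eval_mul_left_term (t : cterm) (x : cpelt) h xi :
  \sum_(u <- x) cp_eval [:: term t u] h xi =
  t.1.1 * cp_eval x (mul (inv t.2) h) (fun Q => xi (phi t.2 (phi (inv t.2) t.1.2 `&` Q))).
Proof.
rewrite /cp_eval mulr_sumr; apply: eq_bigr => u _; rewrite big_seq1.
case: t => [[r1 P] g]; case: u => [[r2 Q] k] /=; rewrite /cp_mul_term /=.
case: asboolP => H1; case: asboolP => H2.
- by rewrite mulrA.
- by exfalso; apply: H2; apply/(g_solve_l Hg).
- by exfalso; apply: H1; apply/(g_solve_l Hg).
- by rewrite mulr0.
Qed.

Lemma eval_false (x : cpelt) h (xi : B -> bool) : (forall Q, xi Q = false) -> cp_eval x h xi = 0.
Proof.
move=> H; rewrite /cp_eval big1 // => t _; rewrite H.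
by case: asboolP => _ //; rewrite mulr0.
Qed.

Lemma xi'_stone (xi : B -> bool) g P : stone_point xi -> I g P ->
  (exists Q, xi (phi g (phi (inv g) P `&` Q))) ->
  stone_point (fun Q => xi (phi g (phi (inv g) P `&` Q))).
Proof.
case=> hm hj h0 _ hP hex.
have hP' : I (inv g) (phi (inv g) P) by exact: (phiVI Hg HP).
split => //.
- move=> U V /=; rewrite -hm -(phiM HP); [|exact: (IIl HP)|exact: (IIl HP)].
  by rewrite meetACA meetxx.
- move=> U V /=; rewrite -hj -(phiU HP); [|exact: (IIl HP)|exact: (IIl HP)].
  by rewrite meetUr.
- by rewrite /= meetx0 (phi0 HP).
Qed.

Lemma left_compat (z x x' : cpelt) : wf z -> cp_eq x x' -> cp_eq (cmul z x) (cmul z x').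
Proof.
move=> hz hxx' h xi sxi; rewrite !eval_mul; apply: sum_In => t ht.
rewrite !eval_mul_left_term.
case: (pselect (exists Q, xi (phi t.2 (phi (inv t.2) t.1.2 `&` Q)))) => [ex|nex].
  by rewrite hxx' //; apply: xi'_stone => //; apply: hz.
rewrite !eval_false // => Q; apply/negP => hQ; apply: nex; by exists Q.
Qed.

Lemma psi_ex (xi : B -> bool) g Q : stone_point xi ->
  exists b, forall P, I g P -> xi (phi g (phi (inv g) P `&` Q)) = xi P && b.
Proof.
move=> sxi.
pose K P := phi g (phi (inv g) P `&` Q).
have Kle P : I g P -> (K P <= P)%O.
  move=> hP; rewrite /K -{2}(phiKV Hg HP hP); apply: (phi_le HP); last exact: leIl.
  exact: (phiVI Hg HP).
have Kmeet P P' : I g P -> I g P' -> K (P `&` P') = P' `&` K P.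
  move=> hP hP'; rewrite /K (phiVM Hg HP) //.
  rewrite (meetC (phi (inv g) P)) -meetA (phiM HP).
  - by rewrite (phiKV Hg HP) //.
  - exact: (phiVI Hg HP).
  - apply: (IIl HP); exact: (phiVI Hg HP).
have keq P P' : I g P -> I g P' -> xi P -> xi P' -> xi (K P) = xi (K P').
  move=> hP hP' xP xP'.
  case: (sxi) => hm _ _ _.
  have e1 := Kmeet P P' hP hP'.
  have e2 := Kmeet P' P hP' hP.
  rewrite meetC in e2.
  have := congr1 xi e1; rewrite e2 !hm xP xP' /= => ->; by [].
case: (pselect (exists P0, I g P0 /\ xi P0)) => [[P0 [hP0 xP0]]|nex].
  exists (xi (K P0)) => P hP.
  case xP: (xi P) => /=; first by apply: keq.
  exact: (stone_le_false sxi (Kle P hP)).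
exists false => P hP; rewrite andbF.
have xP : xi P = false by apply/negP => xP; apply: nex; exists P.
exact: (stone_le_false sxi (Kle P hP)).
Qed.

Lemma eval_mul_right_term (x : cpelt) (u : cterm) h (xi : B -> bool) (b : bool) : wf x ->
  (forall P, I (mul h (inv u.2)) P ->
     xi (phi (mul h (inv u.2)) (phi (inv (mul h (inv u.2))) P `&` u.1.2)) = xi P && b) ->
  \sum_(t <- x) cp_eval [:: term t u] h xi = u.1.1 * b%:R * cp_eval x (mul h (inv u.2)) xi.
Proof.
move=> hx; case: u => [[r2 Q] k] /= hb.
rewrite /cp_eval mulr_sumr; apply: sum_In => t ht; rewrite big_seq1.
have := hx t ht; case: t ht => [[r1 P] g] _ /= hP; rewrite /cp_mul_term /=.
case: asboolP => H1; case: asboolP => H2.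
- subst g; rewrite hb //.
  by move: hb; case: (xi P); case: b => _ /=; rewrite ?mulr1 ?mulr0 ?mul0r // mulrC.
- by exfalso; apply: H2; apply/(g_solve_r Hg).
- by exfalso; apply: H1; apply/(g_solve_r Hg).
- by rewrite !mulr0.
Qed.

Lemma right_compat (x x' z : cpelt) : wf x -> wf x' -> cp_eq x x' -> cp_eq (cmul x z) (cmul x' z).
Proof.
move=> hx hx' hxx' h xi sxi; rewrite !eval_mul exchange_big [RHS]exchange_big.
apply: eq_bigr => u _.
have [b hb] := psi_ex (mul h (inv u.2)) u.1.2 sxi.
by rewrite (eval_mul_right_term hx hb) (eval_mul_right_term hx' hb) hxx'.
Qed.

End CP2.

Section Main.
Variables (d : Order.disp_t) (B : cbDistrLatticeType d).
Variables (G : Type) (mul : G -> G -> G) (inv : G -> G) (e : G).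
Hypothesis Hg : is_group mul inv e.
Variables (R : comPzRingType) (I : G -> B -> Prop) (phi : G -> B -> B).
Hypothesis HP : is_partial_action mul inv e (fun _ => True) I phi.

Local Notation cpelt := (cpelt B G R).
Local Notation cterm := (cterm B G R).
Local Notation cmul := (cp_mul mul inv phi).
Local Notation term := (cp_mul_term mul inv phi).
Local Notation wf := (cp_wf I).
Local Open Scope order_scope.
Local Open Scope ring_scope.

Definition gen (L : seq (cpelt * B * cpelt)) : cpelt :=
  flatten [seq cmul (cmul l.1.1 (delta R l.1.2 e)) l.2 | l <- L].

Definition goodL (B1 : B -> Prop) (L : seq (cpelt * B * cpelt)) :=
  forall l, List.In l L -> [/\ wf l.1.1, B1 l.1.2 & wf l.2].

Lemma cp_eq_sym (x y : cpelt) : cp_eq x y -> cp_eq y x.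
Proof. by move=> H h xi s; rewrite H. Qed.
Lemma cp_eq_trans (x y z : cpelt) : cp_eq x y -> cp_eq y z -> cp_eq x z.
Proof. by move=> H1 H2 h xi s; rewrite H1 ?H2. Qed.

Lemma assoc_eq (x y z : cpelt) : wf x -> wf y -> cp_eq (cmul (cmul x y) z) (cmul x (cmul y z)).
Proof. by move=> hx hy h xi _; apply: (eval_assoc Hg HP). Qed.

Lemma wf_gen B1 L : goodL B1 L -> wf (gen L).
Proof.
move=> hL; apply: wf_flatten => l /hL [h1 _ h3].
apply: (wf_mul Hg HP) => //; apply: (wf_mul Hg HP) => //; apply: wf_delta; exact: (Ie HP).
Qed.

Lemma ideal_J (B1 : B -> Prop) :
  cp_two_sided_ideal mul inv I phi
    (fun x => wf x /\ exists2 L, goodL B1 L & cp_eq x (gen L)).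
Proof.
split.
- split; first by move=> x [].
  move=> x y [hx [L hL Hx]] hy Hxy; split => //; exists L => //.
  exact: cp_eq_trans (cp_eq_sym Hxy) Hx.
- by split => //; exists [::].
- move=> x y [hx [L hL Hx]] [hy [L' hL' Hy]]; split; first exact: wf_cat.
  exists (L ++ L').
    by move=> l hl; case: (List.in_app_or _ _ _ hl) => [/hL|/hL'].
  move=> h xi s; rewrite /cp_add eval_cat Hx // Hy //.
  by rewrite /gen map_cat flatten_cat eval_cat.
- move=> r x [hx [L hL Hx]]; split; first exact: wf_scale.
  exists [seq (cp_scale r l.1.1, l.1.2, l.2) | l <- L].
    move=> l hl; case: (proj1 (List.in_map_iff _ _ _) hl) => l' [<- /hL [h1 h2 h3]]; split => //.
    exact: wf_scale.
  move=> h xi s; rewrite eval_scale Hx // /gen !eval_flatten big_map mulr_sumr.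
  by apply: eq_bigr => l _ /=; rewrite -!scale_mul eval_scale.
- move=> a x ha [hx [L hL Hx]].
  have hg := wf_gen hL.
  have hD : forall W, wf (delta R W e) by move=> W; apply: wf_delta; exact: (Ie HP).
  split; split.
  + exact: (wf_mul Hg HP).
  + exists [seq (cmul a l.1.1, l.1.2, l.2) | l <- L].
      move=> l hl; case: (proj1 (List.in_map_iff _ _ _) hl) => l' [<- /hL [h1 h2 h3]]; split => //.
      exact: (wf_mul Hg HP).
    move=> h xi s.
    rewrite (left_compat Hg HP ha Hx) // eval_mul_flattenr /gen eval_flatten big_map.
    apply: sum_In => l /hL [h1 _ h3] /=.
    have hp := wf_mul Hg HP ha h1.
    rewrite [RHS](eval_assoc Hg HP _ _ _ hp (hD _)) [RHS](eval_assoc Hg HP _ _ _ ha h1).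
    apply: (left_compat Hg HP ha) => //; apply: assoc_eq => //.
  + exact: (wf_mul Hg HP).
  + exists [seq (l.1.1, l.1.2, cmul l.2 a) | l <- L].
      move=> l hl; case: (proj1 (List.in_map_iff _ _ _) hl) => l' [<- /hL [h1 h2 h3]]; split => //.
      exact: (wf_mul Hg HP).
    move=> h xi s.
    rewrite (right_compat Hg HP a hx hg Hx) // eval_mul_flattenl /gen eval_flatten big_map.
    apply: sum_In => l /hL [h1 _ h3] /=.
    by rewrite (eval_assoc Hg HP) //; apply: (wf_mul Hg HP).
Qed.


Lemma nth_In_or (T : Type) (x0 : T) (L : seq T) k : List.In (nth x0 L k) L \/ nth x0 L k = x0.
Proof.
elim: L k => [|a L IH] [|k] /=; try by right.
  by left; left.
by case: (IH k) => [h|h]; [left; right|right].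
Qed.

Lemma In_iota m n k : (m <= k)%N -> (k < m + n)%N -> List.In k (iota m n).
Proof.
elim: n m => [|n IH] m h1 h2 /=; first by rewrite addn0 in h2; move: (leq_trans h2 h1); rewrite ltnn.
case: (eqVneq k m) => [->|hne]; first by left.
right; apply: IH; first by rewrite ltn_neqAle eq_sym hne h1.
by rewrite addSnnS.
Qed.

Lemma construct (B1 : B -> Prop) L U : B1 \bot -> goodL B1 L -> cp_eq (delta R U e) (gen L) ->
  exists (J : Type) (Ui : J -> B), (forall i, B1 (Ui i)) /\
    exists F : (J -> cpelt) -> cpelt, cp_surj_module_hom mul inv e I phi Ui U F.
Proof.
move=> hB0 hL HL.
pose l0 : cpelt * B * cpelt := ([::], \bot, [::]).
pose n := size L.
pose l_ k := nth l0 L k.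
have hl k : [/\ wf (l_ k).1.1, B1 (l_ k).1.2 & wf (l_ k).2].
  by rewrite /l_; case: (nth_In_or l0 L k) => [/hL //|->]; split.
have hD : forall W, wf (delta R W e) by move=> W; apply: wf_delta; exact: (Ie HP).
pose Ui k := (l_ k).1.2.
pose c k := cmul (l_ k).2 (delta R U e).
have hc k : wf (c k) by case: (hl k) => _ _ h3; apply: (wf_mul Hg HP).
pose F (y : nat -> cpelt) := flatten [seq cmul (y k) (c k) | k <- iota 0 n].
exists nat, Ui; split; first by move=> k; case: (hl k).
exists F; split.
- move=> y [hy _].
  have hyk k : wf (y k) by case: (hy k).
  split; first by apply: wf_flatten => k _; apply: (wf_mul Hg HP).
  exists (flatten [seq cmul (y k) (l_ k).2 | k <- iota 0 n]).
    by apply: wf_flatten => k _; case: (hl k) => _ _ h3; apply: (wf_mul Hg HP).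
  move=> h xi s; rewrite eval_flatten eval_mul_flattenl; apply: eq_bigr => k _.
  by case: (hl k) => _ _ h3; rewrite (eval_assoc Hg HP _ _ _ (hyk k) h3).
- move=> y y' [hy _] [hy' _] H h xi s; rewrite !eval_flatten; apply: eq_bigr => k _.
  by case: (hy k) => h1 _; case: (hy' k) => h2 _; apply: (right_compat Hg HP (c k) h1 h2 (H k)).
- move=> y y' _ _ h xi s; rewrite /cp_add eval_cat !eval_flatten -big_split.
  by apply: eq_bigr => k _; rewrite eval_mul_catl.
- move=> a y ha [hy _] h xi s; rewrite eval_flatten eval_mul_flattenr; apply: eq_bigr => k _.
  by case: (hy k) => h1 _; rewrite (eval_assoc Hg HP _ _ _ ha h1).
move=> x [hx [a ha Hx]].
pose y k := cmul a (cmul (l_ k).1.1 (delta R (Ui k) e)).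
have hy k : wf (y k).
  by case: (hl k) => h1 _ _; apply: (wf_mul Hg HP) => //; apply: (wf_mul Hg HP).
exists y.
  split.
    move=> k; split => //; exists (cmul a (l_ k).1.1).
      by case: (hl k) => h1 _ _; apply: (wf_mul Hg HP).
    by case: (hl k) => h1 _ _ h xi s; rewrite (eval_assoc Hg HP _ _ _ ha h1).
  exists (iota 0 n) => k hk.
  have hkn : (n <= k)%N by rewrite leqNgt; apply/negP => hlt; apply: hk; apply: In_iota.
  move=> h xi s; rewrite /y /l_ nth_default // eval_nil eval_mul big1 // => t _.
  by rewrite /= big_nil.
move=> h xi s; rewrite Hx // eval_flatten.
have hUU : cp_eq (delta R U e) (cmul (delta R U e) (delta R U e)).
  move=> h' xi' s'; rewrite /cp_mul /= /cp_mul_term /=.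
  by rewrite (g_inv1 Hg) !(phie HP) meetxx (g_mul1 Hg) mulr1.
rewrite (left_compat Hg HP ha hUU) //.
rewrite (left_compat Hg HP ha (right_compat Hg HP (delta R U e) (hD U) (wf_gen hL) HL)) //.
have e3 : cp_eq (cmul (gen L) (delta R U e))
   (flatten [seq cmul (cmul (cmul l.1.1 (delta R l.1.2 e)) l.2) (delta R U e) | l <- L]).
  by move=> h' xi' s'; rewrite eval_mul_flattenl eval_flatten.
rewrite (left_compat Hg HP ha e3) // eval_mul_flattenr.
rewrite -{1}(mkseq_nth l0 L) /mkseq big_map.
apply: eq_bigr => k _.
case: (hl k) => h1 _ h3.
have hpD := wf_mul Hg HP h1 (hD (Ui k)).
rewrite /y /c (eval_assoc Hg HP _ _ _ ha hpD).
apply: (left_compat Hg HP ha) => //.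
move=> h' xi' s'; rewrite (eval_assoc Hg HP _ _ _ hpD h3) //.
Qed.

End Main.

Unset Implicit Arguments.

Theorem theorem4p13 (d : Order.disp_t) (B : cbDistrLatticeType d)
    (G : Type) (mul : G -> G -> G) (inv : G -> G) (e : G)
    (R : comPzRingType)
    (B1 : B -> Prop) (I1 : G -> B -> Prop) (phi1 : G -> B -> B)
    (I2 : G -> B -> Prop) (phi2 : G -> B -> B) :
  is_group mul inv e ->
  is_partial_subaction mul inv e B1 I1 phi1 (fun _ => True) I2 phi2 ->
  is_gba_ideal (fun _ => True) B1 ->
  (forall J : cpelt B G R -> Prop,
      cp_two_sided_ideal mul inv I2 phi2 J ->
      (forall g U, I1 g U -> J (delta R U g)) ->
      forall x, cp_wf I2 x -> J x) ->
  forall U : B,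
    exists (J : Type) (Ui : J -> B),
      (forall i, B1 (Ui i)) /\
      exists F : (J -> cpelt B G R) -> cpelt B G R,
        cp_surj_module_hom mul inv e I2 phi2 Ui U F.
Proof.
move=> Hg [[hsub1 _] HP1 HP2 hI12 _] HB1 Hid U.
have hB10 : B1 Order.bottom by case: HB1.
have Hgen : forall g V, I1 g V ->
   (fun x => cp_wf I2 x /\ exists2 L, goodL I2 B1 L & cp_eq x (gen mul inv e phi2 L))
   (delta R V g).
  move=> g V hV /=.
  have hB1V : B1 V by case: HP1 => /(_ g) [H _ _ _] _ _ _ _; apply: H.
  split; first by apply: wf_delta; apply: hI12.
  exists [:: (delta R V e, V, delta R V g)].
    move=> l [<-|[]]; split => //=; apply: wf_delta; first exact: (Ie HP2).
    exact: hI12.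
  move=> h xi s; rewrite /gen /cp_mul /= /cp_mul_term /=.
  by rewrite (g_inv1 Hg) !(phie HP2) Order.MeetTheory.meetxx !(g_mul1 Hg) (g_inv1 Hg) !(phie HP2) Order.MeetTheory.meetxx !GRing.mulr1.
have := Hid _ (ideal_J Hg R HP2 B1) Hgen (delta R U e) (wf_delta (Ie HP2 U)).
case=> _ [L hL HL].
exact: (@construct _ _ _ _ _ _ Hg R _ _ HP2 B1 L U hB10 hL HL).
Qed.
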